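(* Let $A\ge 1$. For $0\le b\le a\le A$ define $$e(a,b)=\frac{2b(a-b)}{1+(a-b)^2}.$$ Then the maximum of $e$ over $0\le b\le a\le A$ is attained at $$a=A,\qquad b=\frac{1+A^2-\sqrt{1+A^2}}{A},$$ and the maximal value is $$e\!\left(A,\frac{1+A^2-\sqrt{1+A^2}}{A}\right)=\sqrt{1+A^2}-1.$$
   Context: Geometric meaning: the page is the rectangle $[0,1]\times[0,A]$ (width $1$, height $A\ge1$) with its top edge fixed. A crease through $(0,a)$ on the left edge and $(1,b)$ on the right edge, with $a\ge b$, reflects the lower trapezoid $(0,0),(1,0),(1,b),(0,a)$ across it. The reflected bottom-right corner then has $x$-coordinate $1+e(a,b)$. *)

(* Defs.v *)
From Stdlib Require Import Reals.
Open Scope R_scope.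

Definition e (a b : R) : R := 2 * b * (a - b) / (1 + (a - b) ^ 2).

(* Main.v *)
Require Import Defs.
From Stdlib Require Import Reals Lra Psatz.
Open Scope R_scope.

Theorem mainTheorem5 (A : R) (HA : 1 <= A) :
  let bstar := (1 + A ^ 2 - sqrt (1 + A ^ 2)) / A in
  (0 <= bstar <= A) /\
  (forall a b : R, 0 <= b -> b <= a -> a <= A -> e a b <= e A bstar) /\
  e A bstar = sqrt (1 + A ^ 2) - 1.
Proof.
  intros bstar.
  set (s := sqrt (1 + A ^ 2)).
  assert (Hs2 : s * s = 1 + A ^ 2).
  { unfold s; apply sqrt_sqrt; nra. }
  assert (Hs0 : 0 <= s) by (unfold s; apply sqrt_pos).
  assert (Hs1 : 1 <= s) by nra.
  assert (Hb : bstar = A - (s - 1) / A).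
  { unfold bstar; fold s; field; lra. }
  assert (HE : e A bstar = s - 1).
  { unfold e. rewrite Hb.
    set (c := (s - 1) / A).
    assert (Hc : A * c = s - 1) by (unfold c; field; lra).
    replace (A - (A - c)) with c by ring.
    assert (Hc2 : (s+1)*c^2 = s - 1).
    { apply Rmult_eq_reg_l with (A^2); [|nra].
      replace (A^2 * ((s+1)*c^2)) with ((s+1)*(A*c)^2) by ring.
      rewrite Hc. nra. }
    assert (0 < 1 + c^2) by nra.
    assert (Heq : 2 * (A - c) * c = (s - 1) * (1 + c^2)) by nra.
    rewrite Heq. field. lra. }
  split; [|split; [|exact HE]].
  - rewrite Hb. split.
    + assert ((s - 1) / A <= A).
      { apply Rmult_le_reg_r with A; [lra|].
        unfold Rdiv; rewrite Rmult_assoc, Rinv_l; nra. }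
      lra.
    + assert (0 <= (s - 1) / A) by (unfold Rdiv; apply Rmult_le_pos; [lra | left; apply Rinv_0_lt_compat; lra]). lra.
  - intros a b H0 H1 H2. rewrite HE. unfold e.
    set (d := a - b).
    assert (Hd : 0 <= d) by (unfold d; lra).
    assert (HQ : 0 <= (s+1)*d^2 - 2*A*d + (s-1)).
    { assert (Hp : (s+1)*((s+1)*d^2 - 2*A*d + (s-1)) = ((s+1)*d - A)^2).
      { assert (Hr : (s+1)*((s+1)*d^2 - 2*A*d + (s-1)) - ((s+1)*d - A)^2 = s*s - (1 + A^2)) by ring. lra. }
      assert (0 <= ((s+1)*d - A)^2) by (rewrite <- Rsqr_pow2; apply Rle_0_sqr).
      rewrite <- Hp in H.
      destruct (Rle_or_lt 0 ((s+1)*d^2 - 2*A*d + (s-1))) as [?|Hl]; [assumption|].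
      assert ((s+1)*((s+1)*d^2 - 2*A*d + (s-1)) < 0) by (apply Rmult_pos_neg; lra). lra. }
    assert (Hn : 2*b*d <= (s-1)*(1+d^2)).
    { assert (b <= A - d) by (unfold d; lra). nra. }
    assert (0 < 1 + d^2) by nra.
    unfold Rdiv. apply Rmult_le_reg_r with (1 + d^2); [lra|].
    rewrite Rmult_assoc, Rinv_l; lra.
Qed.
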